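(* Let $\kappa\in\mathbb{K}$, let $(\mathfrak{g},[-,-,-]_\mathfrak{g},\alpha_\mathfrak{g})$ and $(\mathfrak{h},[-,-,-]_\mathfrak{h},\alpha_\mathfrak{h})$ be regular Hom-Lie triple systems, $\theta$ an action of $\mathfrak{g}$ on $\mathfrak{h}$, and $\mathcal{A}:\mathfrak{h}\to\mathfrak{g}$ a $\kappa$-weighted $\mathcal{O}$-operator with respect to $\theta$. Then there is a bijection between the set of equivalence classes of linear deformations of $\mathcal{A}$ and the first cohomology group $\mathcal{H}^1_\mathcal{A}(\mathfrak{h},\mathfrak{g})$.
   Context: All vector spaces are over a field $\mathbb{K}$ of characteristic zero. A Hom-Lie triple system $(\mathfrak{g},[-,-,-]_\mathfrak{g},\alpha_\mathfrak{g})$ is a vector space with a trilinear map $[-,-,-]_\mathfrak{g}$ and a linear map $\alpha_\mathfrak{g}$ with $\alpha_\mathfrak{g}([x,y,z]_\mathfrak{g})=[\alpha_\mathfrak{g}(x),\alpha_\mathfrak{g}(y),\alpha_\mathfrak{g}(z)]_\mathfrak{g}$ such that for all $x,y,z,a,b$: $[x,y,z]_\mathfrak{g}+[y,x,z]_\mathfrak{g}=0$; $[x,y,z]_\mathfrak{g}+[z,x,y]_\mathfrak{g}+[y,z,x]_\mathfrak{g}=0$; $[\alpha_\mathfrak{g}(a),\alpha_\mathfrak{g}(b),[x,y,z]_\mathfrak{g}]_\mathfrak{g}=[[a,b,x]_\mathfrak{g},\alpha_\mathfrak{g}(y),\alpha_\mathfrak{g}(z)]_\mathfrak{g}+[\alpha_\mathfrak{g}(x),[a,b,y]_\mathfrak{g},\alpha_\mathfrak{g}(z)]_\mathfrak{g}+[\alpha_\mathfrak{g}(x),\alpha_\mathfrak{g}(y),[a,b,z]_\mathfrak{g}]_\mathfrak{g}$.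 It is regular if $\alpha_\mathfrak{g}$ is bijective. A homomorphism $\varphi$ of Hom-Lie triple systems satisfies $\varphi\circ\alpha_1=\alpha_2\circ\varphi$ and $\varphi([x,y,z]_1)=[\varphi x,\varphi y,\varphi z]_2$. A representation of $\mathfrak{g}$ on $(V,\beta)$ is a bilinear map $\theta:\mathfrak{g}\times\mathfrak{g}\to\mathrm{End}(V)$ such that, with $D(x,y)=\theta(y,x)-\theta(x,y)$, for all $x,y,a,b$: $\theta(\alpha_\mathfrak{g}(x),\alpha_\mathfrak{g}(y))\circ\beta=\beta\circ\theta(x,y)$; $\theta(\alpha_\mathfrak{g}(a),\alpha_\mathfrak{g}(b))\theta(x,y)-\theta(\alpha_\mathfrak{g}(y),\alpha_\mathfrak{g}(b))\theta(x,a)-\theta(\alpha_\mathfrak{g}(x),[y,a,b]_\mathfrak{g})\circ\beta+D(\alpha_\mathfrak{g}(y),\alpha_\mathfrak{g}(a))\theta(x,b)=0$; $\theta(\alpha_\mathfrak{g}(a),\alpha_\mathfrak{g}(b))D(x,y)-D(\alpha_\mathfrak{g}(x),\alpha_\mathfrak{g}(y))\theta(a,b)+\theta([x,y,a]_\mathfrak{g},\alpha_\mathfrak{g}(b))\circ\beta+\theta(\alpha_\mathfrak{g}(a),[x,y,b]_\mathfrak{g})\circ\beta=0$. An action of $\mathfrak{g}$ on a Hom-Lie triple system $(\mathfrak{h},[-,-,-]_\mathfrak{h},\alpha_\mathfrak{h})$ is a representation $\theta$ of $\mathfrak{g}$ on $(\mathfrak{h},\alpha_\mathfrak{h})$ such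 that for all $x,y\in\mathfrak{g}$, $u,v,w\in\mathfrak{h}$: $\theta(\alpha_\mathfrak{g}(x),\alpha_\mathfrak{g}(y))[u,v,w]_\mathfrak{h}=[\theta(x,y)u,\alpha_\mathfrak{h}(v),\alpha_\mathfrak{h}(w)]_\mathfrak{h}+[\alpha_\mathfrak{h}(u),\theta(x,y)v,\alpha_\mathfrak{h}(w)]_\mathfrak{h}+[\alpha_\mathfrak{h}(u),\alpha_\mathfrak{h}(v),\theta(x,y)w]_\mathfrak{h}$ and $\theta(\alpha_\mathfrak{g}(x),\alpha_\mathfrak{g}(y))[u,v,w]_\mathfrak{h}=[\alpha_\mathfrak{h}(u),\alpha_\mathfrak{h}(v),\theta(x,y)w]_\mathfrak{h}=0$. A $\kappa$-weighted $\mathcal{O}$-operator from $\mathfrak{h}$ to $\mathfrak{g}$ with respect to $\theta$ is a linear map $\mathcal{A}:\mathfrak{h}\to\mathfrak{g}$ with $\mathcal{A}\circ\alpha_\mathfrak{h}=\alpha_\mathfrak{g}\circ\mathcal{A}$ and $[\mathcal{A}u,\mathcal{A}v,\mathcal{A}w]_\mathfrak{g}=\mathcal{A}\big(D(\mathcal{A}u,\mathcal{A}v)w-\theta(\mathcal{A}u,\mathcal{A}w)v+\theta(\mathcal{A}v,\mathcal{A}w)u+\kappa[u,v,w]_\mathfrak{h}\big)$. A homomorphism from such an operator $\mathcal{A}_1$ to another $\mathcal{A}_2$ is a pair of Hom-Lie triple system homomorphisms $\varphi_\mathfrak{h}:\mathfrak{h}\to\mathfrak{h}$, $\varphi_\mathfrak{g}:\mathfrak{g}\to\mathfrak{g}$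 with $\varphi_\mathfrak{g}\circ\mathcal{A}_1=\mathcal{A}_2\circ\varphi_\mathfrak{h}$ and $\varphi_\mathfrak{h}(\theta(x,y)u)=\theta(\varphi_\mathfrak{g}(x),\varphi_\mathfrak{g}(y))\varphi_\mathfrak{h}(u)$. Cohomology: put $\{u,v,w\}_\mathcal{A}=D(\mathcal{A}u,\mathcal{A}v)w-\theta(\mathcal{A}u,\mathcal{A}w)v+\theta(\mathcal{A}v,\mathcal{A}w)u+\kappa[u,v,w]_\mathfrak{h}$, $\theta_\mathcal{A}(u,v)(x)=[x,\mathcal{A}u,\mathcal{A}v]_\mathfrak{g}+\mathcal{A}(\theta(x,\mathcal{A}v)u-D(x,\mathcal{A}u)v)$ and $D_\mathcal{A}(u,v)=\theta_\mathcal{A}(v,u)-\theta_\mathcal{A}(u,v)$. The 1-cocycles $\mathcal{Z}^1_\mathcal{A}(\mathfrak{h},\mathfrak{g})$ are linear maps $f:\mathfrak{h}\to\mathfrak{g}$ with $\alpha_\mathfrak{g}\circ f=f\circ\alpha_\mathfrak{h}$ and $\theta_\mathcal{A}(v_2,v_3)f(v_1)-\theta_\mathcal{A}(v_1,v_3)f(v_2)+D_\mathcal{A}(v_1,v_2)f(v_3)-f(\{v_1,v_2,v_3\}_\mathcal{A})=0$ for all $v_i\in\mathfrak{h}$. For $a,b\in\mathfrak{g}$ with $\alpha_\mathfrak{g}(a)=a,\alpha_\mathfrak{g}(b)=b$ let $\Im(a,b)v=\mathcal{A}(D(a,b)\alpha_\mathfrak{h}^{-1}(v))-[a,b,\mathcal{A}\alpha_\mathfrak{h}^{-1}(v)]_\mathfrak{g}$;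 the 1-coboundaries $\mathcal{B}^1_\mathcal{A}(\mathfrak{h},\mathfrak{g})$ form the span of all such $\Im(a,b)$ (these lie in $\mathcal{Z}^1_\mathcal{A}$), and $\mathcal{H}^1_\mathcal{A}(\mathfrak{h},\mathfrak{g})=\mathcal{Z}^1_\mathcal{A}(\mathfrak{h},\mathfrak{g})/\mathcal{B}^1_\mathcal{A}(\mathfrak{h},\mathfrak{g})$. A linear deformation of $\mathcal{A}$ is $\mathcal{A}_t=\mathcal{A}+t\mathcal{A}_1$ with $\mathcal{A}_1:\mathfrak{h}\to\mathfrak{g}$ linear and $t$ a parameter with $t^2=0$, such that $\mathcal{A}_t$ is a $\kappa$-weighted $\mathcal{O}$-operator (all structures extended $\mathbb{K}[t]/(t^2)$-linearly). Two linear deformations $\mathcal{A}_t=\mathcal{A}+t\mathcal{A}_1$ and $\mathcal{A}'_t=\mathcal{A}+t\mathcal{A}'_1$ are equivalent if there exist $a,b\in\mathfrak{g}$ with $\alpha_\mathfrak{g}(a)=a$, $\alpha_\mathfrak{g}(b)=b$ such that the pair $(\mathrm{Id}_\mathfrak{h}+t\,\alpha_\mathfrak{h}^{-1}\circ D(a,b),\ \mathrm{Id}_\mathfrak{g}+t\,\alpha_\mathfrak{g}^{-1}\circ\mathcal{L}(a,b))$, where $\mathcal{L}(a,b)x=[a,b,x]_\mathfrak{g}$, is a homomorphism from $\mathcal{A}_t$ to $\mathcal{A}'_t$ (the first map playing the role of $\varphi_\mathfrak{h}$, the second of $\varphi_\mathfrak{g}$). *)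

(* Defs.v *)
From HB Require Import structures.
From mathcomp Require Import all_boot all_algebra.
From Stdlib Require Import Relations.
Set Implicit Arguments. Unset Strict Implicit. Unset Printing Implicit Defensive.
Import GRing.Theory.
Local Open Scope ring_scope.

Section HomLTS.
Variable K : fieldType.

Definition linmap (U V : lmodType K) (f : U -> V) : Prop :=
  forall (c : K) x y, f (c *: x + y) = c *: f x + f y.

Definition trilinear (V : lmodType K) (br : V -> V -> V -> V) : Prop :=
  (forall y z, linmap (fun x => br x y z)) /\
  (forall x z, linmap (fun y => br x y z)) /\
  (forall x y, linmap (fun z => br x y z)).

Definition HomLTS (V : lmodType K) (br : V -> V -> V -> V) (al : V -> V) : Prop :=
  linmap al /\ trilinear br /\
      (forall x y z, al (br x y z) = br (al x) (al y) (al z)) /\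
      (forall x y z, br x y z + br y x z = 0) /\
      (forall x y z, br x y z + br z x y + br y z x = 0) /\
      (forall a b x y z,
         br (al a) (al b) (br x y z) =
         br (br a b x) (al y) (al z) + br (al x) (br a b y) (al z)
         + br (al x) (al y) (br a b z)).

Definition HomLTS_hom (V W : lmodType K)
  (br1 : V -> V -> V -> V) (al1 : V -> V) (br2 : W -> W -> W -> W) (al2 : W -> W)
  (phi : V -> W) : Prop :=
  [/\ linmap phi, (forall x, phi (al1 x) = al2 (phi x)) &
      (forall x y z, phi (br1 x y z) = br2 (phi x) (phi y) (phi z))].

Definition Dop (G V : lmodType K) (theta : G -> G -> V -> V) (x y : G) : V -> V :=
  fun u => theta y x u - theta x y u.

Definition representation (G V : lmodType K) (brg : G -> G -> G -> G) (alg : G -> G)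
  (theta : G -> G -> V -> V) (beta : V -> V) : Prop :=
  linmap beta /\
      (forall x y, linmap (theta x y)) /\
      (forall y u, linmap (fun x => theta x y u)) /\
      (forall x u, linmap (fun y => theta x y u)) /\
      (forall x y u, theta (alg x) (alg y) (beta u) = beta (theta x y u)) /\
      (forall x y a b u,
         theta (alg a) (alg b) (theta x y u) - theta (alg y) (alg b) (theta x a u)
         - theta (alg x) (brg y a b) (beta u)
         + Dop theta (alg y) (alg a) (theta x b u) = 0) /\
      (forall x y a b u,
         theta (alg a) (alg b) (Dop theta x y u) - Dop theta (alg x) (alg y) (theta a b u)
         + theta (brg x y a) (alg b) (beta u) + theta (alg a) (brg x y b) (beta u) = 0).

Definition action (G H : lmodType K) (brg : G -> G -> G -> G) (alg : G -> G)
  (brh : H -> H -> H -> H) (alh : H -> H) (theta : G -> G -> H -> H) : Prop :=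
  [/\ representation brg alg theta alh,
      (forall x y u v w,
         theta (alg x) (alg y) (brh u v w) =
         brh (theta x y u) (alh v) (alh w) + brh (alh u) (theta x y v) (alh w)
         + brh (alh u) (alh v) (theta x y w)),
      (forall x y u v w, theta (alg x) (alg y) (brh u v w) = 0) &
      (forall x y u v w, brh (alh u) (alh v) (theta x y w) = 0)].

Definition OOp (G H : lmodType K) (brg : G -> G -> G -> G) (alg : G -> G)
  (brh : H -> H -> H -> H) (alh : H -> H) (theta : G -> G -> H -> H) (kappa : K)
  (A : H -> G) : Prop :=
  [/\ linmap A, (forall u, A (alh u) = alg (A u)) &
      (forall u v w,
         brg (A u) (A v) (A w) =
         A (Dop theta (A u) (A v) w - theta (A u) (A w) v + theta (A v) (A w) u
            + kappa *: brh u v w))].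

Definition OOp_hom (G H : lmodType K) (brg : G -> G -> G -> G) (alg : G -> G)
  (brh : H -> H -> H -> H) (alh : H -> H) (theta : G -> G -> H -> H)
  (A1 A2 : H -> G) (phih : H -> H) (phig : G -> G) : Prop :=
  [/\ HomLTS_hom brh alh brh alh phih, HomLTS_hom brg alg brg alg phig,
      (forall u, phig (A1 u) = A2 (phih u)) &
      (forall x y u, phih (theta x y u) = theta (phig x) (phig y) (phih u))].

(* An element x0 + t x1 of V (x) K[t]/(t^2) is represented by the pair (x0, x1);
   as a K-vector space this is V * V (componentwise operations), and the
   K-scalar action coincides with the action of K inside K[t]/(t^2). *)
Definition dual (V : lmodType K) := (V * V)%type.

Definition ext1 (V W : lmodType K) (f : V -> W) : dual V -> dual W :=
  fun x => (f x.1, f x.2).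

(* K[t]/(t^2)-trilinear extension of a trilinear map (t^2 = 0) *)
Definition ext3 (V : lmodType K) (br : V -> V -> V -> V) :
  dual V -> dual V -> dual V -> dual V :=
  fun x y z => (br x.1 y.1 z.1, br x.2 y.1 z.1 + br x.1 y.2 z.1 + br x.1 y.1 z.2).

(* K[t]/(t^2)-bilinear extension of theta, valued in K[t]/(t^2)-linear maps *)
Definition extTheta (G H : lmodType K) (theta : G -> G -> H -> H) :
  dual G -> dual G -> dual H -> dual H :=
  fun x y u => (theta x.1 y.1 u.1,
                theta x.2 y.1 u.1 + theta x.1 y.2 u.1 + theta x.1 y.1 u.2).

(* A_t = A + t A1, extended K[t]/(t^2)-linearly *)
Definition defo (G H : lmodType K) (A A1 : H -> G) : dual H -> dual G :=
  fun u => (A u.1, A u.2 + A1 u.1).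

(* Id + t f, extended K[t]/(t^2)-linearly *)
Definition idPlusT (V : lmodType K) (f : V -> V) : dual V -> dual V :=
  fun x => (x.1, x.2 + f x.1).

Section Fixed.
Variables (G H : lmodType K) (brg : G -> G -> G -> G) (alg alg_inv : G -> G)
  (brh : H -> H -> H -> H) (alh alh_inv : H -> H) (theta : G -> G -> H -> H)
  (kappa : K) (A : H -> G).

Definition linear_deformation (A1 : H -> G) : Prop :=
  linmap A1 /\
  OOp (ext3 brg) (ext1 alg) (ext3 brh) (ext1 alh) (extTheta theta) kappa (defo A A1).

Definition equiv_deformations (A1 A1' : H -> G) : Prop :=
  exists a b : G, [/\ alg a = a, alg b = b &
    OOp_hom (ext3 brg) (ext1 alg) (ext3 brh) (ext1 alh) (extTheta theta)
      (defo A A1) (defo A A1')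
      (idPlusT (fun u => alh_inv (Dop theta a b u)))
      (idPlusT (fun x => alg_inv (brg a b x)))].

(* the set of equivalence classes: quotient of the set of linear deformations
   by (the equivalence relation generated by) equiv_deformations *)
Definition deformation_rel (A1 A1' : H -> G) : Prop :=
  [/\ linear_deformation A1, linear_deformation A1' & equiv_deformations A1 A1'].

Definition deformation_equiv : relation (H -> G) :=
  clos_refl_sym_trans (H -> G) deformation_rel.

Definition bracketA (u v w : H) : H :=
  Dop theta (A u) (A v) w - theta (A u) (A w) v + theta (A v) (A w) u + kappa *: brh u v w.

Definition thetaA (u v : H) : G -> G :=
  fun x => brg x (A u) (A v) + A (theta x (A v) u - Dop theta x (A u) v).

Definition DA (u v : H) : G -> G := fun x => thetaA v u x - thetaA u v x.

Definition Z1 (f : H -> G) : Prop :=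
  [/\ linmap f, (forall u, alg (f u) = f (alh u)) &
      (forall v1 v2 v3,
         thetaA v2 v3 (f v1) - thetaA v1 v3 (f v2) + DA v1 v2 (f v3)
         - f (bracketA v1 v2 v3) = 0)].

Definition Imap (a b : G) : H -> G :=
  fun v => A (Dop theta a b (alh_inv v)) - brg a b (A (alh_inv v)).

Definition B1 (f : H -> G) : Prop :=
  exists s : seq (K * G * G),
    all (fun p => (alg p.1.2 == p.1.2) && (alg p.2 == p.2)) s /\
    forall v, f v = \sum_(p <- s) p.1.1 *: Imap p.1.2 p.2 v.

End Fixed.
End HomLTS.

(* Main.v *)
Require Import Defs.
From HB Require Import structures.
From mathcomp Require Import all_boot all_algebra.
From Stdlib Require Import Relations FunctionalExtensionality.
Set Implicit Arguments. Unset Strict Implicit. Unset Printing Implicit Defensive.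
Import GRing.Theory.
Local Open Scope ring_scope.

Inductive gexp := GAt of nat | GAdd of gexp & gexp | GOpp of gexp | GZero.

Fixpoint geval (V : zmodType) (env : seq V) (e : gexp) : V :=
  match e with
  | GAt n => nth 0 env n
  | GAdd a b => geval env a + geval env b
  | GOpp a => - geval env a
  | GZero => 0
  end.

Fixpoint gcoef (e : gexp) (i : nat) : int :=
  match e with
  | GAt n => if n == i then 1 else 0
  | GAdd a b => gcoef a i + gcoef b i
  | GOpp a => - gcoef a i
  | GZero => 0
  end.

Fixpoint gbnd (e : gexp) : nat :=
  match e with
  | GAt n => n.+1
  | GAdd a b => maxn (gbnd a) (gbnd b)
  | GOpp a => gbnd a
  | GZero => 0
  end.

Lemma gevalE (V : zmodType) (env : seq V) e n : (gbnd e <= n)%N ->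
  geval env e = \sum_(i < n) env`_i *~ gcoef e i.
Proof.
elim: e => [k|a iha b ihb|a iha|] /= hb.
- rewrite (bigD1 (Ordinal hb)) //= eqxx mulr1z big1 ?addr0 // => i /eqP hi.
  case: eqP => [ek|]; last by rewrite mulr0z.
  by case: hi; apply: val_inj; rewrite /= ek.
- rewrite geq_max in hb; case/andP: hb => ha hb.
  by rewrite iha // ihb // -big_split /=; apply: eq_bigr => i _; rewrite mulrzDr.
- by rewrite iha // -sumrN; apply: eq_bigr => i _; rewrite mulrNz.
- by rewrite big1 // => i _; rewrite mulr0z.
Qed.

Lemma geval_eq (V : zmodType) (env : seq V) e1 e2 :
  all (fun i => gcoef e1 i == gcoef e2 i) (iota 0 (maxn (gbnd e1) (gbnd e2))) ->
  geval env e1 = geval env e2.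
Proof.
move=> /allP h.
rewrite (@gevalE _ _ _ (maxn (gbnd e1) (gbnd e2))) ?leq_maxl //.
rewrite (@gevalE _ _ _ (maxn (gbnd e1) (gbnd e2))) ?leq_maxr //.
apply: eq_bigr => i _; have := h i; rewrite mem_iota add0n ltn_ord => /(_ isT) /eqP ->.
by [].
Qed.

Ltac gmem x env := match env with
  | nil => constr:(false)
  | ?y :: _ => let _ := constr:(@Logic.eq_refl _ x : x = y) in constr:(true)
  | _ :: ?r => gmem x r
  end.
Ltac gfind x env := match env with
  | ?y :: _ => let _ := constr:(@Logic.eq_refl _ x : x = y) in constr:(0%nat)
  | _ :: ?r => let n := gfind x r in constr:(S n)
  end.

Ltac gapp env t := lazymatch env with
  | nil => constr:([:: t])
  | ?x :: ?r => let r' := gapp r t in constr:(x :: r')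
  end.
Ltac gsize env := lazymatch env with
  | nil => constr:(0%nat)
  | _ :: ?r => let n := gsize r in constr:(S n)
  end.

Ltac greify env t :=
  lazymatch t with
  | (?a + ?b)%R =>
      let r1 := greify env a in
      lazymatch r1 with (?env1, ?ea) =>
        let r2 := greify env1 b in
        lazymatch r2 with (?env2, ?eb) => constr:((env2, GAdd ea eb)) end end
  | (- ?a)%R =>
      let r1 := greify env a in
      lazymatch r1 with (?env1, ?ea) => constr:((env1, GOpp ea)) end
  | 0%R => constr:((env, GZero))
  | _ =>
      let b := gmem t env in
      lazymatch b with
      | true => let n := gfind t env in constr:((env, GAt n))
      | false => let n := gsize env in let env' := gapp env t in
                 constr:((env', GAt n))
      end
  end.

Ltac gsolve :=
  lazymatch goal with |- @eq ?V ?l ?r =>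
    let r1 := greify (@nil V) l in
    lazymatch r1 with (?env1, ?el) =>
      let r2 := greify env1 r in
      lazymatch r2 with (?env2, ?er) =>
        let env3 := env2 in
        change (geval env3 el = geval env3 er);
        apply: geval_eq; vm_compute; reflexivity
      end end end.


Lemma combine (V : zmodType) (X Y Z : V) : X = Y + Z -> Z = 0 -> X = Y.
Proof. by move=> -> ->; rewrite addr0. Qed.

Ltac use_eq h := let T := type of h in lazymatch T with
  | ?l = ?r => apply: (@combine _ _ _ (l - r)); [| by rewrite h subrr] end.
Ltac use_eqN h := let T := type of h in lazymatch T with
  | ?l = ?r => apply: (@combine _ _ _ (r - l)); [| by rewrite h subrr] end.

Lemma pairE (U V : Type) (x y : U * V) : x.1 = y.1 -> x.2 = y.2 -> x = y.
Proof. by case: x; case: y => ? ? ? ? /= -> ->. Qed.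

Section Lin.
Variable K : fieldType.

Lemma linP (U V : lmodType K) (f : U -> V) : linmap f ->
  [/\ (forall x y, f (x + y) = f x + f y), (forall x, f (- x) = - f x), f 0 = 0 &
      (forall c x, f (c *: x) = c *: f x)].
Proof.
move=> hf.
have hD x y : f (x + y) = f x + f y by rewrite -[x]scale1r hf !scale1r.
have h0 : f 0 = 0 by apply: (addIr (f 0)); rewrite -hD !addr0 add0r.
split=> //.
- by move=> x; apply/eqP; rewrite -addr_eq0 -hD addNr h0.
- by move=> c x; move: (hf c x 0); rewrite h0 !addr0.
Qed.

Lemma lin_inv (U : lmodType K) (f fi : U -> U) :
  linmap f -> cancel f fi -> cancel fi f -> linmap fi.
Proof. by move=> hf fK fiK c x y; apply: (can_inj fK); rewrite hf !fiK. Qed.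

Lemma inv_comm (X Y : Type) (al ali : X -> X) (be bei : Y -> Y) (F : X -> Y) :
  cancel be bei -> cancel ali al -> (forall x, F (al x) = be (F x)) ->
  forall x, bei (F x) = F (ali x).
Proof. by move=> beK aliK hF x; rewrite -{1}(aliK x) hF beK. Qed.

Lemma OOp_transfer (G H : lmodType K) brg alg brh alh theta kappa
  (P Q : H -> G) phih phig :
  OOp brg alg brh alh theta kappa P ->
  OOp_hom brg alg brh alh theta P Q phih phig ->
  (forall y, exists x, phih x = y) -> OOp brg alg brh alh theta kappa Q.
Proof.
case=> hP hPa hPb [[hh hha hhb] [hg hga hgb] hPQ hth] hsur.
have [hD hN h0 hZ] := linP hh.
have [gD gN g0 gZ] := linP hg.
have [PD PN P0 PZ] := linP hP.
split.
- move=> c x y; case: (hsur x) => x' <-; case: (hsur y) => y' <-.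
  by rewrite -hZ -hD -!hPQ PD PZ gD gZ.
- by move=> y; case: (hsur y) => x <-; rewrite -hha -!hPQ hPa hga.
- move=> u v w; case: (hsur u) => u' <-; case: (hsur v) => v' <-.
  case: (hsur w) => w' <-.
  rewrite -!hPQ -hgb hPb hPQ /Dop.
  by rewrite !hD !hN hZ hhb !hth !hPQ.
Qed.

End Lin.

Section Main.
Variables (K : fieldType) (kappa : K) (G H : lmodType K)
  (brg : G -> G -> G -> G) (alg alg_inv : G -> G)
  (brh : H -> H -> H -> H) (alh alh_inv : H -> H)
  (theta : G -> G -> H -> H) (A : H -> G).
Hypotheses (hG : HomLTS brg alg) (algK : cancel alg alg_inv) (alg_invK : cancel alg_inv alg)
  (hH : HomLTS brh alh) (alhK : cancel alh alh_inv) (alh_invK : cancel alh_inv alh)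
  (hact : action brg alg brh alh theta) (hA : OOp brg alg brh alh theta kappa A).

Lemma alg_l : linmap alg. Proof. by case: hG. Qed.
Lemma alh_l : linmap alh. Proof. by case: hH. Qed.
Lemma algi_l : linmap alg_inv. Proof. exact: lin_inv alg_l algK alg_invK. Qed.
Lemma alhi_l : linmap alh_inv. Proof. exact: lin_inv alh_l alhK alh_invK. Qed.
Lemma A_l : linmap A. Proof. by case: hA. Qed.
Lemma brg_l1 y z : linmap (fun x => brg x y z). Proof. by case: hG => _ [[h _] _]. Qed.
Lemma brg_l2 x z : linmap (fun y => brg x y z). Proof. by case: hG => _ [[_ [h _]] _]. Qed.
Lemma brg_l3 x y : linmap (fun z => brg x y z). Proof. by case: hG => _ [[_ [_ h]] _]. Qed.
Lemma brh_l1 y z : linmap (fun x => brh x y z). Proof. by case: hH => _ [[h _] _]. Qed.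
Lemma brh_l2 x z : linmap (fun y => brh x y z). Proof. by case: hH => _ [[_ [h _]] _]. Qed.
Lemma brh_l3 x y : linmap (fun z => brh x y z). Proof. by case: hH => _ [[_ [_ h]] _]. Qed.
Lemma th_l1 y u : linmap (fun x => theta x y u).
Proof. by case: hact => [[_ [_ [h _]]] _ _ _]. Qed.
Lemma th_l2 x u : linmap (fun y => theta x y u).
Proof. by case: hact => [[_ [_ [_ [h _]]]] _ _ _]. Qed.
Lemma th_l3 x y : linmap (theta x y).
Proof. by case: hact => [[_ [h _]] _ _ _]. Qed.

Lemma rep1 x y u : theta (alg x) (alg y) (alh u) = alh (theta x y u).
Proof. by case: hact => [[_ [_ [_ [_ [h _]]]]] _ _ _]. Qed.
Lemma rep3 x y a b u :
  theta (alg a) (alg b) (Dop theta x y u) - Dop theta (alg x) (alg y) (theta a b u)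
  + theta (brg x y a) (alg b) (alh u) + theta (alg a) (brg x y b) (alh u) = 0.
Proof. by case: hact => [[_ [_ [_ [_ [_ [_ h]]]]]] _ _ _]. Qed.
Lemma act1 x y u v w :
  theta (alg x) (alg y) (brh u v w) =
  brh (theta x y u) (alh v) (alh w) + brh (alh u) (theta x y v) (alh w)
  + brh (alh u) (alh v) (theta x y w).
Proof. by case: hact. Qed.
Lemma act2 x y u v w : theta (alg x) (alg y) (brh u v w) = 0.
Proof. by case: hact. Qed.
Lemma algM x y z : alg (brg x y z) = brg (alg x) (alg y) (alg z).
Proof. by case: hG => _ [_ [h _]]. Qed.
Lemma brg_skew x y z : brg x y z + brg y x z = 0.
Proof. by case: hG => _ [_ [_ [h _]]]. Qed.
Lemma brg_cyc x y z : brg x y z + brg z x y + brg y z x = 0.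
Proof. by case: hG => _ [_ [_ [_ [h _]]]]. Qed.
Lemma brg_fund a b x y z :
  brg (alg a) (alg b) (brg x y z) =
  brg (brg a b x) (alg y) (alg z) + brg (alg x) (brg a b y) (alg z)
  + brg (alg x) (alg y) (brg a b z).
Proof. by case: hG => _ [_ [_ [_ [_ h]]]]. Qed.
Lemma A_comm u : A (alh u) = alg (A u). Proof. by case: hA. Qed.
Lemma A_br u v w : brg (A u) (A v) (A w) =
  A (Dop theta (A u) (A v) w - theta (A u) (A w) v + theta (A v) (A w) u
     + kappa *: brh u v w).
Proof. by case: hA. Qed.

Lemma brg1D y z (x1 x2 : G) : brg (x1 + x2) y z = brg x1 y z + brg x2 y z.
Proof. by have [h _ _ _] := linP (brg_l1 y z); exact: h. Qed.
Lemma brg1N y z (x1 : G) : brg (- x1) y z = - brg x1 y z.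
Proof. by have [_ h _ _] := linP (brg_l1 y z); exact: h. Qed.
Lemma brg10 y z : brg 0 y z = 0.
Proof. by have [_ _ h _] := linP (brg_l1 y z); exact: h. Qed.
Lemma brg1Z y z (c : K) (x1 : G) : brg (c *: x1) y z = c *: brg x1 y z.
Proof. by have [_ _ _ h] := linP (brg_l1 y z); exact: h. Qed.
Lemma brg2D x z (x1 x2 : G) : brg x (x1 + x2) z = brg x x1 z + brg x x2 z.
Proof. by have [h _ _ _] := linP (brg_l2 x z); exact: h. Qed.
Lemma brg2N x z (x1 : G) : brg x (- x1) z = - brg x x1 z.
Proof. by have [_ h _ _] := linP (brg_l2 x z); exact: h. Qed.
Lemma brg20 x z : brg x 0 z = 0.
Proof. by have [_ _ h _] := linP (brg_l2 x z); exact: h. Qed.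
Lemma brg2Z x z (c : K) (x1 : G) : brg x (c *: x1) z = c *: brg x x1 z.
Proof. by have [_ _ _ h] := linP (brg_l2 x z); exact: h. Qed.
Lemma brg3D x y (x1 x2 : G) : brg x y (x1 + x2) = brg x y x1 + brg x y x2.
Proof. by have [h _ _ _] := linP (brg_l3 x y); exact: h. Qed.
Lemma brg3N x y (x1 : G) : brg x y (- x1) = - brg x y x1.
Proof. by have [_ h _ _] := linP (brg_l3 x y); exact: h. Qed.
Lemma brg30 x y : brg x y 0 = 0.
Proof. by have [_ _ h _] := linP (brg_l3 x y); exact: h. Qed.
Lemma brg3Z x y (c : K) (x1 : G) : brg x y (c *: x1) = c *: brg x y x1.
Proof. by have [_ _ _ h] := linP (brg_l3 x y); exact: h. Qed.
Lemma brh1D y z (x1 x2 : H) : brh (x1 + x2) y z = brh x1 y z + brh x2 y z.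
Proof. by have [h _ _ _] := linP (brh_l1 y z); exact: h. Qed.
Lemma brh1N y z (x1 : H) : brh (- x1) y z = - brh x1 y z.
Proof. by have [_ h _ _] := linP (brh_l1 y z); exact: h. Qed.
Lemma brh10 y z : brh 0 y z = 0.
Proof. by have [_ _ h _] := linP (brh_l1 y z); exact: h. Qed.
Lemma brh1Z y z (c : K) (x1 : H) : brh (c *: x1) y z = c *: brh x1 y z.
Proof. by have [_ _ _ h] := linP (brh_l1 y z); exact: h. Qed.
Lemma brh2D x z (x1 x2 : H) : brh x (x1 + x2) z = brh x x1 z + brh x x2 z.
Proof. by have [h _ _ _] := linP (brh_l2 x z); exact: h. Qed.
Lemma brh2N x z (x1 : H) : brh x (- x1) z = - brh x x1 z.
Proof. by have [_ h _ _] := linP (brh_l2 x z); exact: h. Qed.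
Lemma brh20 x z : brh x 0 z = 0.
Proof. by have [_ _ h _] := linP (brh_l2 x z); exact: h. Qed.
Lemma brh2Z x z (c : K) (x1 : H) : brh x (c *: x1) z = c *: brh x x1 z.
Proof. by have [_ _ _ h] := linP (brh_l2 x z); exact: h. Qed.
Lemma brh3D x y (x1 x2 : H) : brh x y (x1 + x2) = brh x y x1 + brh x y x2.
Proof. by have [h _ _ _] := linP (brh_l3 x y); exact: h. Qed.
Lemma brh3N x y (x1 : H) : brh x y (- x1) = - brh x y x1.
Proof. by have [_ h _ _] := linP (brh_l3 x y); exact: h. Qed.
Lemma brh30 x y : brh x y 0 = 0.
Proof. by have [_ _ h _] := linP (brh_l3 x y); exact: h. Qed.
Lemma brh3Z x y (c : K) (x1 : H) : brh x y (c *: x1) = c *: brh x y x1.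
Proof. by have [_ _ _ h] := linP (brh_l3 x y); exact: h. Qed.
Lemma th1D y u (x1 x2 : G) : theta (x1 + x2) y u = theta x1 y u + theta x2 y u.
Proof. by have [h _ _ _] := linP (th_l1 y u); exact: h. Qed.
Lemma th1N y u (x1 : G) : theta (- x1) y u = - theta x1 y u.
Proof. by have [_ h _ _] := linP (th_l1 y u); exact: h. Qed.
Lemma th10 y u : theta 0 y u = 0.
Proof. by have [_ _ h _] := linP (th_l1 y u); exact: h. Qed.
Lemma th1Z y u (c : K) (x1 : G) : theta (c *: x1) y u = c *: theta x1 y u.
Proof. by have [_ _ _ h] := linP (th_l1 y u); exact: h. Qed.
Lemma th2D x u (x1 x2 : G) : theta x (x1 + x2) u = theta x x1 u + theta x x2 u.
Proof. by have [h _ _ _] := linP (th_l2 x u); exact: h. Qed.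
Lemma th2N x u (x1 : G) : theta x (- x1) u = - theta x x1 u.
Proof. by have [_ h _ _] := linP (th_l2 x u); exact: h. Qed.
Lemma th20 x u : theta x 0 u = 0.
Proof. by have [_ _ h _] := linP (th_l2 x u); exact: h. Qed.
Lemma th2Z x u (c : K) (x1 : G) : theta x (c *: x1) u = c *: theta x x1 u.
Proof. by have [_ _ _ h] := linP (th_l2 x u); exact: h. Qed.
Lemma th3D x y (x1 x2 : H) : theta x y (x1 + x2) = theta x y x1 + theta x y x2.
Proof. by have [h _ _ _] := linP (th_l3 x y); exact: h. Qed.
Lemma th3N x y (x1 : H) : theta x y (- x1) = - theta x y x1.
Proof. by have [_ h _ _] := linP (th_l3 x y); exact: h. Qed.
Lemma th30 x y : theta x y 0 = 0.
Proof. by have [_ _ h _] := linP (th_l3 x y); exact: h. Qed.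
Lemma th3Z x y (c : K) (x1 : H) : theta x y (c *: x1) = c *: theta x y x1.
Proof. by have [_ _ _ h] := linP (th_l3 x y); exact: h. Qed.
Lemma A_D  (x1 x2 : H) : A (x1 + x2) = A x1 + A x2.
Proof. by have [h _ _ _] := linP (A_l); exact: h. Qed.
Lemma A_N  (x1 : H) : A (- x1) = - A x1.
Proof. by have [_ h _ _] := linP (A_l); exact: h. Qed.
Lemma A_0  : A 0 = 0.
Proof. by have [_ _ h _] := linP (A_l); exact: h. Qed.
Lemma A_Z  (c : K) (x1 : H) : A (c *: x1) = c *: A x1.
Proof. by have [_ _ _ h] := linP (A_l); exact: h. Qed.
Lemma alg_D  (x1 x2 : G) : alg (x1 + x2) = alg x1 + alg x2.
Proof. by have [h _ _ _] := linP (alg_l); exact: h. Qed.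
Lemma alg_N  (x1 : G) : alg (- x1) = - alg x1.
Proof. by have [_ h _ _] := linP (alg_l); exact: h. Qed.
Lemma alg_0  : alg 0 = 0.
Proof. by have [_ _ h _] := linP (alg_l); exact: h. Qed.
Lemma alg_Z  (c : K) (x1 : G) : alg (c *: x1) = c *: alg x1.
Proof. by have [_ _ _ h] := linP (alg_l); exact: h. Qed.
Lemma alh_D  (x1 x2 : H) : alh (x1 + x2) = alh x1 + alh x2.
Proof. by have [h _ _ _] := linP (alh_l); exact: h. Qed.
Lemma alh_N  (x1 : H) : alh (- x1) = - alh x1.
Proof. by have [_ h _ _] := linP (alh_l); exact: h. Qed.
Lemma alh_0  : alh 0 = 0.
Proof. by have [_ _ h _] := linP (alh_l); exact: h. Qed.
Lemma alh_Z  (c : K) (x1 : H) : alh (c *: x1) = c *: alh x1.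
Proof. by have [_ _ _ h] := linP (alh_l); exact: h. Qed.
Lemma algi_D  (x1 x2 : G) : alg_inv (x1 + x2) = alg_inv x1 + alg_inv x2.
Proof. by have [h _ _ _] := linP (algi_l); exact: h. Qed.
Lemma algi_N  (x1 : G) : alg_inv (- x1) = - alg_inv x1.
Proof. by have [_ h _ _] := linP (algi_l); exact: h. Qed.
Lemma algi_0  : alg_inv 0 = 0.
Proof. by have [_ _ h _] := linP (algi_l); exact: h. Qed.
Lemma algi_Z  (c : K) (x1 : G) : alg_inv (c *: x1) = c *: alg_inv x1.
Proof. by have [_ _ _ h] := linP (algi_l); exact: h. Qed.
Lemma alhi_D  (x1 x2 : H) : alh_inv (x1 + x2) = alh_inv x1 + alh_inv x2.
Proof. by have [h _ _ _] := linP (alhi_l); exact: h. Qed.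
Lemma alhi_N  (x1 : H) : alh_inv (- x1) = - alh_inv x1.
Proof. by have [_ h _ _] := linP (alhi_l); exact: h. Qed.
Lemma alhi_0  : alh_inv 0 = 0.
Proof. by have [_ _ h _] := linP (alhi_l); exact: h. Qed.
Lemma alhi_Z  (c : K) (x1 : H) : alh_inv (c *: x1) = c *: alh_inv x1.
Proof. by have [_ _ _ h] := linP (alhi_l); exact: h. Qed.
Ltac expand := rewrite ?/Dop ?/thetaA ?/DA ?/bracketA ?/Imap /=; repeat progress rewrite ?brg1D ?brg1N ?brg10 ?brg1Z ?brg2D ?brg2N ?brg20 ?brg2Z ?brg3D ?brg3N ?brg30 ?brg3Z ?brh1D ?brh1N ?brh10 ?brh1Z ?brh2D ?brh2N ?brh20 ?brh2Z ?brh3D ?brh3N ?brh30 ?brh3Z ?th1D ?th1N ?th10 ?th1Z ?th2D ?th2N ?th20 ?th2Z ?th3D ?th3N ?th30 ?th3Z ?A_D ?A_N ?A_0 ?A_Z ?alg_D ?alg_N ?alg_0 ?alg_Z ?alh_D ?alh_N ?alh_0 ?alh_Z ?algi_D ?algi_N ?algi_0 ?algi_Z ?alhi_D ?alhi_N ?alhi_0 ?alhi_Z ?scalerDr ?scalerN ?scaler0.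

Notation LD := (linear_deformation brg alg brh alh theta kappa A).
Notation Z1' := (Z1 brg alg brh alh theta kappa A).

Lemma def_iff_Z1 (A1 : H -> G) : LD A1 <-> Z1' A1.
Proof.
split.
- case=> hA1 [hd hda hdb].
  have [A1D A1N A10 A1Z] := linP hA1.
  split => //.
  + move=> u; have := congr1 snd (hda (u, 0)).
    by rewrite /= alh_0 !A_0 !add0r => ->.
  + move=> u v w; have := congr1 snd (hdb (u,0) (v,0) (w,0)).
    rewrite /ext3 /defo /extTheta /Dop /= => E.
    have sk1 := brg_skew (A1 v) (A u) (A w).
    have cy := brg_cyc (A u) (A v) (A1 w).
    have sk2 := brg_skew (A v) (A1 w) (A u).
    use_eq E; use_eqN sk1; use_eqN cy; use_eq sk2.
    expand; rewrite ?A10 ?A1D ?A1N ?A1Z; expand.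
    gsolve.
- case=> hA1 hcomm hcoc.
  have [A1D A1N A10 A1Z] := linP hA1.
  split => //; split.
  + move=> c [x1 x2] [y1 y2]; apply: pairE; rewrite /defo /=.
      by rewrite A_D A_Z.
    rewrite !A_D !A_Z A1D A1Z; expand; gsolve.
  + move=> [u1 u2]; apply: pairE; rewrite /defo /ext1 /=; first exact: A_comm.
    by rewrite alg_D A_comm hcomm.
  + move=> [u1 u2] [v1 v2] [w1 w2]; apply: pairE; rewrite /ext3 /defo /extTheta /=.
      have o := A_br u1 v1 w1.
      use_eq o; expand; gsolve.
    have o1 := A_br u2 v1 w1.
    have o2 := A_br u1 v2 w1.
    have o3 := A_br u1 v1 w2.
    have hc := hcoc u1 v1 w1.
    have sk1 := brg_skew (A1 v1) (A u1) (A w1).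
    have cy := brg_cyc (A u1) (A v1) (A1 w1).
    have sk2 := brg_skew (A v1) (A1 w1) (A u1).
    use_eq o1; use_eq o2; use_eq o3; use_eq hc; use_eq sk1; use_eq cy; use_eqN sk2.
    expand; rewrite ?A10 ?A1D ?A1N ?A1Z; expand.
    gsolve.
Qed.

Section Fixed.
Variables (a b : G).
Hypotheses (ha : alg a = a) (hb : alg b = b).

Lemma th_alh x y u : alg x = x -> alg y = y -> theta x y (alh u) = alh (theta x y u).
Proof. by move=> hx hy; have := rep1 x y u; rewrite hx hy. Qed.

Lemma Dab_alh u : Dop theta a b (alh u) = alh (Dop theta a b u).
Proof. by rewrite /Dop !th_alh // alh_D alh_N. Qed.

Lemma DabK u : alh_inv (Dop theta a b (alh u)) = Dop theta a b u.
Proof. by rewrite Dab_alh alhK. Qed.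

Lemma fE u : alh_inv (Dop theta a b u) = Dop theta a b (alh_inv u).
Proof. by rewrite -{1}(alh_invK u) DabK. Qed.

Lemma brg_ab x : brg a b (alg x) = alg (brg a b x).
Proof. by rewrite algM ha hb. Qed.

Lemma ggK x : alg_inv (brg a b (alg x)) = brg a b x.
Proof. by rewrite brg_ab algK. Qed.

Lemma ggE x : alg_inv (brg a b x) = brg a b (alg_inv x).
Proof. by rewrite -{1}(alg_invK x) ggK. Qed.

Lemma A_inv u : alg_inv (A u) = A (alh_inv u).
Proof. by rewrite -{1}(alh_invK u) A_comm algK. Qed.

Lemma act2' x y u v w : alg x = x -> alg y = y -> theta x y (brh u v w) = 0.
Proof. by move=> hx hy; have := act2 x y u v w; rewrite hx hy. Qed.

Lemma derh x y z :
  alh_inv (Dop theta a b (brh x y z)) =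
  brh (alh_inv (Dop theta a b x)) y z + brh x (alh_inv (Dop theta a b y)) z
  + brh x y (alh_inv (Dop theta a b z)).
Proof.
rewrite -(alh_invK x) -(alh_invK y) -(alh_invK z) !DabK.
set x' := alh_inv x; set y' := alh_inv y; set z' := alh_inv z.
rewrite /Dop !act2' // subrr alhi_0.
have e1 := act1 a b x' y' z'; rewrite ha hb act2' // in e1.
have e2 := act1 b a x' y' z'; rewrite ha hb act2' // in e2.
use_eq e2; use_eqN e1; expand; gsolve.
Qed.

Lemma derg x y z :
  alg_inv (brg a b (brg x y z)) =
  brg (alg_inv (brg a b x)) y z + brg x (alg_inv (brg a b y)) z
  + brg x y (alg_inv (brg a b z)).
Proof.
apply: (can_inj algK); rewrite alg_invK !alg_D !algM !alg_invK.
by have := brg_fund a b x y z; rewrite ha hb.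
Qed.

Lemma thcomp x y u :
  alh_inv (Dop theta a b (theta x y u)) =
  theta (alg_inv (brg a b x)) y u + theta x (alg_inv (brg a b y)) u
  + theta x y (alh_inv (Dop theta a b u)).
Proof.
rewrite -(alg_invK x) -(alg_invK y) -(alh_invK u) rep1 !DabK !ggK.
set x' := alg_inv x; set y' := alg_inv y; set u' := alh_inv u.
have e := rep3 a b x' y' u'; rewrite ha hb in e.
use_eqN e; expand; gsolve.
Qed.

Definition fh := fun u => alh_inv (Dop theta a b u).
Definition fg := fun x => alg_inv (brg a b x).

Lemma hom_ab (A1 A1' : H -> G) :
  (forall u, A1' u = A1 u - Imap brg alh_inv theta A a b u) ->
  OOp_hom (ext3 brg) (ext1 alg) (ext3 brh) (ext1 alh) (extTheta theta)
    (defo A A1) (defo A A1') (idPlusT fh) (idPlusT fg).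
Proof.
move=> hA1'; split.
- split.
  + move=> c [x1 x2] [y1 y2]; apply: pairE; rewrite /idPlusT /fh /=; first by [].
    expand; gsolve.
  + move=> [x1 x2]; apply: pairE; rewrite /idPlusT /fh /ext1 /=; first by [].
    by rewrite DabK alh_D alh_invK.
  + move=> [x1 x2] [y1 y2] [z1 z2]; apply: pairE; rewrite /idPlusT /ext3 /=; first by [].
    have d := derh x1 y1 z1; rewrite /fh; use_eq d; expand; gsolve.
- split.
  + move=> c [x1 x2] [y1 y2]; apply: pairE; rewrite /idPlusT /fg /=; first by [].
    expand; gsolve.
  + move=> [x1 x2]; apply: pairE; rewrite /idPlusT /fg /ext1 /=; first by [].
    by rewrite ggK alg_D alg_invK.
  + move=> [x1 x2] [y1 y2] [z1 z2]; apply: pairE; rewrite /idPlusT /ext3 /=; first by [].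
    have d := derg x1 y1 z1; rewrite /fg; use_eq d; expand; gsolve.
- move=> [u1 u2]; apply: pairE; rewrite /idPlusT /defo /fg /fh /=; first by [].
  rewrite hA1' fE ggE A_inv; expand; gsolve.
- move=> [x1 x2] [y1 y2] [u1 u2]; apply: pairE; rewrite /idPlusT /extTheta /fg /fh /=; first by [].
  have d := thcomp x1 y1 u1; use_eq d; expand; gsolve.
Qed.

Lemma hom_extract (A1 A1' : H -> G) :
  OOp_hom (ext3 brg) (ext1 alg) (ext3 brh) (ext1 alh) (extTheta theta)
    (defo A A1) (defo A A1') (idPlusT fh) (idPlusT fg) ->
  forall u, A1 u - A1' u = Imap brg alh_inv theta A a b u.
Proof.
case=> _ _ h3 _ u; have := congr1 snd (h3 (u, 0)).
rewrite /idPlusT /defo /fg /fh /= fE ggE A_inv => E.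
use_eq E; expand; gsolve.
Qed.

Lemma surj_ip (f : H -> H) : forall y, exists x, idPlusT f x = y.
Proof. by move=> [y1 y2]; exists (y1, y2 - f y1); rewrite /idPlusT /= subrK. Qed.

Lemma Imap_lin : linmap (Imap brg alh_inv theta A a b).
Proof. by move=> c x y; expand; gsolve. Qed.

Lemma deform_step (A1 : H -> G) : LD A1 ->
  LD (fun u => A1 u - Imap brg alh_inv theta A a b u) /\
  equiv_deformations brg alg alg_inv brh alh alh_inv theta A A1
     (fun u => A1 u - Imap brg alh_inv theta A a b u).
Proof.
move=> [hA1 hd].
have hom := @hom_ab A1 (fun u => A1 u - Imap brg alh_inv theta A a b u) (fun u => erefl).
split; last by exists a, b; split.
split; last exact: OOp_transfer hd hom (surj_ip _).
have [A1D A1N A10 A1Z] := linP hA1.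
move=> c x y; rewrite A1D A1Z Imap_lin; expand; gsolve.
Qed.

End Fixed.

Lemma Imap_scale c a b u :
  Imap brg alh_inv theta A (c *: a) b u = c *: Imap brg alh_inv theta A a b u.
Proof. by expand; gsolve. Qed.

Notation DE := (deformation_equiv brg alg alg_inv brh alh alh_inv theta kappa A).
Notation B1' := (B1 brg alg alh_inv theta A).

Lemma chain (s : seq (K * G * G)) :
  all (fun p => (alg p.1.2 == p.1.2) && (alg p.2 == p.2)) s ->
  forall A1, LD A1 ->
  LD (fun v => A1 v - \sum_(p <- s) p.1.1 *: Imap brg alh_inv theta A p.1.2 p.2 v) /\
  DE A1 (fun v => A1 v - \sum_(p <- s) p.1.1 *: Imap brg alh_inv theta A p.1.2 p.2 v).
Proof.
elim: s => [|[[c a] b] s IH] hs A1 hd.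
  have -> : (fun v => A1 v - \sum_(p <- [::]) p.1.1 *: Imap brg alh_inv theta A p.1.2 p.2 v) = A1.
    by apply: functional_extensionality => v; rewrite big_nil subr0.
  by split=> //; apply: rst_refl.
move: hs => /= /andP [/andP [/eqP ha /eqP hb] hs].
have ha' : alg (c *: a) = c *: a by rewrite alg_Z ha.
have [hB hAB] := deform_step ha' hb hd.
have [hC hBC] := IH hs _ hB.
set F := (fun v => _ - \sum_(p <- _ :: _) _).
have -> : F = (fun v => (fun u => A1 u - Imap brg alh_inv theta A (c *: a) b u) v -
   \sum_(p <- s) p.1.1 *: Imap brg alh_inv theta A p.1.2 p.2 v).
  apply: functional_extensionality => v; rewrite /F big_cons Imap_scale /=; gsolve.
split=> //.
apply: rst_trans hBC; apply: rst_step; split=> //.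
Qed.

Lemma equiv_B1 A1 A1' : DE A1 A1' -> B1' (fun v => A1 v - A1' v).
Proof.
rewrite /deformation_equiv; elim=> {A1 A1'}.
- move=> x y [_ _ [a [b [ha hb hom]]]].
  exists [:: (1, a, b)]; split; first by rewrite /= ha hb !eqxx.
  by move=> v; rewrite big_cons big_nil scale1r addr0 (hom_extract ha hb hom).
- by move=> x; exists [::]; split=> // v; rewrite big_nil subrr.
- move=> x y _ [s [hs e]].
  exists (map (fun p => (- p.1.1, p.1.2, p.2)) s); split.
    by rewrite all_map; apply: sub_all hs => p.
  move=> v; rewrite big_map -[y v - x v]opprB e -sumrN.
  by apply: eq_bigr => p _; rewrite scaleNr.
- move=> x y z _ [s1 [h1 e1]] _ [s2 [h2 e2]].
  exists (s1 ++ s2); split; first by rewrite all_cat h1 h2.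
  by move=> v; rewrite big_cat -e1 -e2 /=; gsolve.
Qed.

Lemma main_sec :
  exists F : (H -> G) -> (H -> G),
    [/\ (forall A1, LD A1 -> Z1' (F A1)),
        (forall A1 A1', LD A1 -> LD A1' ->
           (DE A1 A1' <-> B1' (fun v => F A1 v - F A1' v))) &
        (forall f, Z1' f -> exists A1, LD A1 /\ B1' (fun v => F A1 v - f v))].
Proof.
exists (fun A1 => A1); split.
- by move=> A1 /def_iff_Z1.
- move=> A1 A1' hd hd'; split; first exact: equiv_B1.
  move=> [s [hs e]].
  have [_ heq] := chain hs hd.
  have -> : A1' = (fun v => A1 v - \sum_(p <- s) p.1.1 *: Imap brg alh_inv theta A p.1.2 p.2 v).
    apply: functional_extensionality => v; rewrite -e /=.
    by rewrite opprB addrC subrK.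
  exact: heq.
- move=> f hf; exists f; split; first by apply/def_iff_Z1.
  by exists [::]; split=> // v; rewrite big_nil subrr.
Qed.

End Main.

Theorem mainTheorem6 (K : fieldType) (Kchar0 : [pchar K] =i pred0) (kappa : K)
  (g h : lmodType K)
  (brg : g -> g -> g -> g) (alg alg_inv : g -> g)
  (brh : h -> h -> h -> h) (alh alh_inv : h -> h)
  (theta : g -> g -> h -> h) (A : h -> g) :
  HomLTS brg alg -> cancel alg alg_inv -> cancel alg_inv alg ->
  HomLTS brh alh -> cancel alh alh_inv -> cancel alh_inv alh ->
  action brg alg brh alh theta ->
  OOp brg alg brh alh theta kappa A ->
  exists F : (h -> g) -> (h -> g),
    [/\ (forall A1, linear_deformation brg alg brh alh theta kappa A A1 ->
                    Z1 brg alg brh alh theta kappa A (F A1)),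
        (forall A1 A1',
           linear_deformation brg alg brh alh theta kappa A A1 ->
           linear_deformation brg alg brh alh theta kappa A A1' ->
           (deformation_equiv brg alg alg_inv brh alh alh_inv theta kappa A A1 A1'
            <-> B1 brg alg alh_inv theta A (fun v => F A1 v - F A1' v))) &
        (forall f, Z1 brg alg brh alh theta kappa A f ->
           exists A1, linear_deformation brg alg brh alh theta kappa A A1 /\
                      B1 brg alg alh_inv theta A (fun v => F A1 v - f v))].
Proof.
move=> *; exact: main_sec.
Qed.
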